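(* Let $(B,D,d,\theta)$ be a crossed module, $A$ an abelian group and $\zeta:\operatorname{Ker}d\to A$ a surjective abstract $\zeta$-kernel of this crossed module. Then there exists a $\zeta$-extension of co-type $B\xrightarrow{d}D$ if and only if the obstruction $\operatorname{Obs}(\zeta)$ vanishes in $H^3(\operatorname{Coker}d,A)$ (with $\operatorname{Coker}d$ acting trivially on $A$).
   Context: A crossed module $(B,D,d,\theta)$: groups $B,D$, homomorphisms $d:B\to D$, $\theta:D\to\operatorname{Aut}B$ with $\theta_{d(b)}(b')=bb'b^{-1}$ and $d(\theta_x(b))=x\,d(b)\,x^{-1}$. Then $\operatorname{Ker}d\subseteq Z(B)$, $d(B)\trianglelefteq D$ and $\operatorname{Ker}d$ is a $\operatorname{Coker}d=D/d(B)$-module via $s\cdot c=\theta_x(c)$, $x\in s$. An abstract $\zeta$-kernel: a homomorphism $\zeta:\operatorname{Ker}d\to A$ ($A$ abelian) with $\zeta(\theta_x(c))=\zeta(c)$ for all $x\in D,c\in\operatorname{Ker}d$. A $\zeta$-extension of co-type $B\xrightarrow{d}D$: an exact sequence of groups $0\to A\xrightarrow{j}E\xrightarrow{p}D\to1$ with $j(A)\subseteq Z(E)$, together with a homomorphism $\beta:B\to E$ such that $p\beta=d$, $\beta(\theta_x b)=e\,\beta(b)\,e^{-1}$ whenever $p(e)=x$, and $j(\zeta(c))=\beta(c)$ for all $c\in\operatorname{Ker}d$. Obstruction: choose representatives $x_s\in D$ of each $s\in\operatorname{Coker}d$ ($x_1=1$) and for each $x$ in class $s$ an element $b_x\in B$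 with $x_s=d(b_x)x$, $b_{x_s}=0$ (writing $B$ additively, not necessarily abelian). Put $\tilde H_{r,s}=-b_{x_rx_s}$ and define $k:(\operatorname{Coker}d)^3\to\operatorname{Ker}d$ by $\theta_{x_s}(\tilde H_{r,t})+\tilde H_{s,rt}+k(s,r,t)=\tilde H_{s,r}+\tilde H_{sr,t}$; $k$ is a 3-cocycle of $\operatorname{Coker}d$ with values in $\operatorname{Ker}d$. Then $\operatorname{Obs}(\zeta)=[\zeta\circ k]\in H^3(\operatorname{Coker}d,A)$. *)

(* Defs.v *)
From HB Require Import structures.
From mathcomp Require Import all_boot all_algebra.

Set Implicit Arguments.
Unset Strict Implicit.
Unset Printing Implicit Defensive.

Definition ghom (G H : groupType) (f : G -> H) : Prop :=
  forall x y : G, f (x * y)%g = (f x * f y)%g.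

(* (B,D,d,theta) is a crossed module: d : B -> D hom, theta : D -> Aut B hom
   (each theta x is an endomorphism, theta (x y) = theta x o theta y,
   theta 1 = id, hence each theta x is an automorphism), plus the two
   crossed-module identities. *)
Definition crossed_module (B D : groupType) (d : B -> D) (theta : D -> B -> B)
  : Prop :=
  ghom d /\
  (forall x : D, ghom (theta x)) /\
  (forall (x y : D) (b : B), theta (x * y)%g b = theta x (theta y b)) /\
  (forall b : B, theta 1%g b = b) /\
  (forall b b' : B, theta (d b) b' = (b * b' * b^-1)%g) /\
  (forall (x : D) (b : B), d (theta x b) = (x * d b * x^-1)%g).

Definition is_cokernel (B D Q : groupType) (d : B -> D) (pi : D -> Q) : Prop :=
  [/\ ghom pi,
      (forall s : Q, exists x : D, pi x = s) &
      (forall x : D, pi x = 1%g <-> exists b : B, x = d b)].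

(* Abstract zeta-kernel.  zeta is given as a function on all of B, but only
   its restriction to Ker d = {c | d c = 1} is ever used: it is a
   homomorphism Ker d -> A invariant under theta. *)
Definition abstract_kernel (B D : groupType) (A : zmodType) (d : B -> D)
  (theta : D -> B -> B) (zeta : B -> A) : Prop :=
  (forall c c' : B, d c = 1%g -> d c' = 1%g ->
      zeta (c * c')%g = (zeta c + zeta c')%R) /\
  (forall (x : D) (c : B), d c = 1%g -> zeta (theta x c) = zeta c).

Definition kernel_surjective (B D : groupType) (A : zmodType) (d : B -> D)
  (zeta : B -> A) : Prop :=
  forall a : A, exists c : B, d c = 1%g /\ zeta c = a.

Definition zeta_extension_exists (B D : groupType) (A : zmodType)
  (d : B -> D) (theta : D -> B -> B) (zeta : B -> A) : Prop :=
  exists (E : groupType) (j : A -> E) (p : E -> D) (beta : B -> E),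
    (forall a a' : A, j (a + a')%R = (j a * j a')%g) /\
    ghom p /\
    injective j /\
    (forall e : E, p e = 1%g <-> exists a : A, e = j a) /\
    (forall x : D, exists e : E, p e = x) /\
    (forall (a : A) (e : E), (j a * e)%g = (e * j a)%g) /\
    ghom beta /\
    (forall b : B, p (beta b) = d b) /\
    (forall (x : D) (e : E) (b : B), p e = x ->
        beta (theta x b) = (e * beta b * (e^-1))%g) /\
    (forall c : B, d c = 1%g -> j (zeta c) = beta c).

Definition obstruction_data (B D Q : groupType) (d : B -> D) (pi : D -> Q)
  (xs : Q -> D) (bx : D -> B) : Prop :=
  [/\ (forall s : Q, pi (xs s) = s),
      xs 1%g = 1%g,
      (forall x : D, xs (pi x) = (d (bx x) * x)%g) &
      (forall s : Q, bx (xs s) = 1%g)].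

Definition Htil (B D Q : groupType) (xs : Q -> D) (bx : D -> B) (r s : Q) : B :=
  (bx (xs r * xs s)%g)^-1%g.

(* k(s,r,t) defined by
   theta_{x_s}(H_{r,t}) + H_{s,rt} + k(s,r,t) = H_{s,r} + H_{sr,t}
   (B written additively, not necessarily abelian), i.e.
   k(s,r,t) = (theta_{x_s}(H_{r,t}) H_{s,rt})^{-1} (H_{s,r} H_{sr,t}). *)
Definition obs_k (B D Q : groupType) (theta : D -> B -> B) (xs : Q -> D)
  (bx : D -> B) (s r t : Q) : B :=
  ((theta (xs s) (Htil xs bx r t) * Htil xs bx s (r * t)%g)^-1 *
   (Htil xs bx s r * Htil xs bx (s * r)%g t))%g.

Definition coboundary3 (Q : groupType) (A : zmodType) (f : Q -> Q -> Q -> A)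
  : Prop :=
  exists g : Q -> Q -> A, forall s r t : Q,
    f s r t = (g r t - g (s * r)%g t + g s (r * t)%g - g s r)%R.

Definition obs_vanishes (B D Q : groupType) (A : zmodType)
  (theta : D -> B -> B) (zeta : B -> A) (xs : Q -> D) (bx : D -> B) : Prop :=
  coboundary3 (fun s r t : Q => zeta (obs_k theta xs bx s r t)).

(* Main.v *)
Require Import Defs.
From HB Require Import structures.
From Stdlib Require Import ClassicalEpsilon.
From mathcomp Require Import all_boot all_algebra.
Set Implicit Arguments.
Unset Strict Implicit.
Unset Printing Implicit Defensive.
Import GRing.Theory.
Open Scope group_scope.

Lemma ghom1 (G H : groupType) (f : G -> H) : ghom f -> f 1 = 1.
Proof. move=> hf; apply: (@mulgI _ (f 1)); by rewrite -hf !mulg1. Qed.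

Lemma ghomV (G H : groupType) (f : G -> H) x : ghom f -> f x^-1 = (f x)^-1.
Proof. move=> hf; apply/esym/mulg1_eq; by rewrite -hf mulgV ghom1. Qed.

Section Constr.
Variables (B D Q : groupType) (A : zmodType) (d : B -> D) (theta : D -> B -> B)
  (zeta : B -> A) (pi : D -> Q) (xs : Q -> D) (bx : D -> B) (g0 : Q -> Q -> A).
Hypotheses (HCM : crossed_module d theta) (HK : abstract_kernel d theta zeta)
  (HC : is_cokernel d pi) (HO : obstruction_data d pi xs bx)
  (Hg : forall s r t, zeta (obs_k theta xs bx s r t) =
      (g0 r t - g0 (s * r) t + g0 s (r * t) - g0 s r)%R).

Lemma dM : ghom d. Proof. by case: HCM. Qed.
Lemma thM x : ghom (theta x). Proof. by case: HCM => _ []. Qed.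
Lemma thMM x y b : theta (x * y) b = theta x (theta y b). Proof. by case: HCM => _ [_ []]. Qed.
Lemma th1 b : theta 1 b = b. Proof. by case: HCM => _ [_ [_ []]]. Qed.
Lemma thd b b' : theta (d b) b' = b * b' * b^-1. Proof. by case: HCM => _ [_ [_ [_ []]]]. Qed.
Lemma dth x b : d (theta x b) = x * d b * x^-1. Proof. by case: HCM => _ [_ [_ [_ []]]]. Qed.
Lemma zM c c' : d c = 1 -> d c' = 1 -> zeta (c * c') = (zeta c + zeta c')%R.
Proof. by case: HK => h _; apply: h. Qed.
Lemma zth x c : d c = 1 -> zeta (theta x c) = zeta c. Proof. by case: HK => _ h; apply: h. Qed.
Lemma piM : ghom pi. Proof. by case: HC. Qed.
Lemma piker x : pi x = 1 <-> exists b, x = d b. Proof. by case: HC. Qed.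
Lemma pixs s : pi (xs s) = s. Proof. by case: HO. Qed.
Lemma xs1 : xs 1 = 1. Proof. by case: HO. Qed.
Lemma xspi x : xs (pi x) = d (bx x) * x. Proof. by case: HO. Qed.
Lemma bxxs s : bx (xs s) = 1. Proof. by case: HO. Qed.

Lemma d1 : d 1 = 1. Proof. exact: ghom1 dM. Qed.
Lemma dV b : d b^-1 = (d b)^-1. Proof. exact: ghomV dM. Qed.
Lemma pi1 : pi 1 = 1. Proof. exact: ghom1 piM. Qed.
Lemma thx1 x : theta x 1 = 1. Proof. exact: ghom1 (thM x). Qed.
Lemma thV x b : theta x b^-1 = (theta x b)^-1. Proof. exact: ghomV (thM x). Qed.
Lemma z1 : zeta 1 = 0%R.
Proof. have := zM d1 d1; rewrite mulg1 => h. by apply: (@addrI _ (zeta 1)); rewrite addr0 -h. Qed.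
Lemma bx1 : bx 1 = 1. Proof. by rewrite -xs1 bxxs. Qed.
Lemma pid b : pi (d b) = 1. Proof. by apply/piker; exists b. Qed.
Lemma kerC c b : d c = 1 -> c * b = b * c.
Proof. move=> hc; have := thd c b; rewrite hc th1 => e.
by rewrite {2}e mulgVK. Qed.
Lemma dthk x c : d c = 1 -> d (theta x c) = 1.
Proof. by move=> hc; rewrite dth hc mulg1 mulgV. Qed.

Lemma bx1' : bx 1 = 1. Proof. exact: bx1. Qed.

Definition g q r := (g0 q r - g0 1 1)%R.
Definition X w q := d w * xs q.
Definition Z w q := zeta (bx (X w q) * w).
Definition H q r := Htil xs bx q r.
Definition F x y := (g (pi x) (pi y) +
  Z ((bx x)^-1 * theta (xs (pi x)) (bx y)^-1 * H (pi x) (pi y)) (pi x * pi y))%R.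

Lemma H1q r : H 1 r = 1.
Proof. by rewrite /H /Htil xs1 mul1g bxxs invg1. Qed.
Lemma Hq1 q : H q 1 = 1.
Proof. by rewrite /H /Htil xs1 mulg1 bxxs invg1. Qed.
Lemma dH q r : d (H q r) * xs (q * r) = xs q * xs r.
Proof.
rewrite /H /Htil dV.
have -> : q * r = pi (xs q * xs r) by rewrite piM !pixs.
by rewrite xspi mulKg.
Qed.
Lemma piX w q : pi (X w q) = q.
Proof. by rewrite /X piM pid mul1g pixs. Qed.
Lemma kerX w q : d (bx (X w q) * w) = 1.
Proof.
have e := xspi (X w q); rewrite piX in e.
have : d (bx (X w q)) = xs q * (X w q)^-1 by rewrite e (mulgK (X w q)).
by rewrite dM => ->; rewrite /X invgM !mulgA mulgV mul1g mulVg.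
Qed.
Lemma Zmul w q c : d c = 1 -> Z (w * c) q = (Z w q + zeta c)%R.
Proof.
move=> hc; rewrite /Z.
have -> : X (w * c) q = X w q by rewrite /X dM hc mulg1.
by rewrite mulgA (zM (kerX w q) hc).
Qed.
Lemma Xbx x : X (bx x)^-1 (pi x) = x.
Proof. by rewrite /X dV xspi mulKg. Qed.
Lemma Zb x : Z (bx x)^-1 (pi x) = 0%R.
Proof. by rewrite /Z Xbx mulgV z1. Qed.

Lemma k11t t : obs_k theta xs bx 1 1 t = 1.
Proof.
rewrite /obs_k -/(H 1 t) -/(H 1 (1*t)) -/(H 1 1) -/(H (1*1) t) !mul1g !H1q.
by rewrite xs1 th1 !mulg1 invg1.
Qed.
Lemma ks11 s : obs_k theta xs bx s 1 1 = 1.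
Proof.
rewrite /obs_k -/(H 1 1) -/(H s (1*1)) -/(H s 1) -/(H (s*1) 1) !mulg1 !Hq1.
by rewrite thx1 !mulg1 invg1.
Qed.
Lemma g1q r : g 1 r = 0%R.
Proof.
have := Hg 1 1 r; rewrite k11t z1 !mul1g => e.
by rewrite /g [RHS]e subrr add0r.
Qed.
Lemma gq1 s : g s 1 = 0%R.
Proof.
have := Hg s 1 1; rewrite ks11 z1 !mulg1 => e.
by rewrite /g -[RHS]oppr0 e subrK opprB.
Qed.
Lemma zA (a b e f c : A) : (a - c - (b - c) + (e - c) - (f - c) = a - b + e - f)%R.
Proof. by rewrite !opprB !addrA !subrK. Qed.
Lemma Hgg s r t : zeta (obs_k theta xs bx s r t) =
      (g r t - g (s * r) t + g s (r * t) - g s r)%R.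
Proof. by rewrite /g zA Hg. Qed.
Lemma thetaH q r u : theta (xs q) (theta (xs r) u) * H q r = H q r * theta (xs (q * r)) u.
Proof. by rewrite -thMM -dH thMM thd mulgVK. Qed.
Lemma Xprod w w' q r :
  X (w * theta (xs q) w' * H q r) (q * r) = X w q * X w' r.
Proof.
rewrite /X !dM -[_ * d (H q r) * _]mulgA dH dth.
by rewrite !mulgA mulgVK.
Qed.
Lemma rearr (G : groupType) (a b h c c2 : G) :
  (forall z, c * z = z * c) -> (forall z, c2 * z = z * c2) ->
  a * c * (b * c2) * h = a * b * h * (c * c2).
Proof.
move=> hc hc2; rewrite -!mulgA; congr (a * _).
rewrite (hc (b * (c2 * h))) -!mulgA; congr (b * _).
by rewrite (hc2 (h * c)) -mulgA.
Qed.
Lemma Fprod w w' q r :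
  (F (X w q) (X w' r) + Z w q + Z w' r =
   g q r + Z (w * theta (xs q) w' * H q r) (q * r))%R.
Proof.
have hc := kerX w q; have hc' := kerX w' r.
have ew : (bx (X w q))^-1 * (bx (X w q) * w) = w by rewrite mulKg.
have ew' : (bx (X w' r))^-1 * (bx (X w' r) * w') = w' by rewrite mulKg.
move: hc hc' ew ew'.
rewrite {1 2}/Z.
set x := X w q; set y := X w' r; set c := bx x * w; set c' := bx y * w'.
move=> hc hc' ew ew'.
rewrite /F !piX -ew -ew' (thM _ (bx y)^-1 c') rearr; first last.
- by move=> z; apply: kerC; apply: dthk.
- by move=> z; apply: kerC.
rewrite Zmul; last by rewrite dM hc dthk // mulg1.
by rewrite zM ?zth ?dthk // !addrA.
Qed.
Lemma zB (a b c e z : A) : (a + (b + (z + (c - b + e - a))) = c + (e + z))%R.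
Proof.
rewrite addrCA addrA addrC !addrA (addrAC _ (- a)%R b) subrK (addrAC _ (- b)%R e) subrK.
by rewrite [RHS]addrC addrA.
Qed.
Lemma F1y y : F 1 y = 0%R.
Proof.
rewrite /F pi1 g1q bx1 xs1 th1 H1q invg1 !mul1g mulg1 Zb add0r //.
Qed.
Lemma Fx1 x : F x 1 = 0%R.
Proof.
rewrite /F pi1 gq1 bx1 invg1 thx1 Hq1 !mulg1 Zb add0r //.
Qed.
Lemma Fcoc x y z : (F x y + F (x * y) z = F y z + F x (y * z))%R.
Proof.
set q := pi x; set r := pi y; set t := pi z.
set Wxy := (bx x)^-1 * theta (xs q) (bx y)^-1 * H q r.
set Wyz := (bx y)^-1 * theta (xs r) (bx z)^-1 * H r t.
have P1 := Fprod (bx x)^-1 (bx y)^-1 q r.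
rewrite !Xbx !Zb !addr0 -/Wxy in P1.
have X1 := Xprod (bx x)^-1 (bx y)^-1 q r.
rewrite !Xbx -/Wxy in X1.
have P2 := Fprod Wxy (bx z)^-1 (q * r) t.
rewrite X1 Xbx Zb addr0 in P2.
have P3 := Fprod (bx y)^-1 (bx z)^-1 r t.
rewrite !Xbx !Zb !addr0 -/Wyz in P3.
have X3 := Xprod (bx y)^-1 (bx z)^-1 r t.
rewrite !Xbx -/Wyz in X3.
have P4 := Fprod (bx x)^-1 Wyz q (r * t).
rewrite X3 Xbx Zb addr0 in P4.
have X2 := Xprod Wxy (bx z)^-1 (q * r) t.
rewrite X1 Xbx in X2.
have X4 := Xprod (bx x)^-1 Wyz q (r * t).
rewrite X3 Xbx in X4.
set W1 := (bx x)^-1 * theta (xs q) Wyz * H q (r * t) in P4 X4.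
set W2 := Wxy * theta (xs (q * r)) (bx z)^-1 * H (q * r) t in P2 X2.
have ek : obs_k theta xs bx q r t =
   (theta (xs q) (H r t) * H q (r * t))^-1 * (H q r * H (q * r) t) by [].
have eW : W2 = W1 * obs_k theta xs bx q r t.
  rewrite ek /W1 /W2 /Wxy /Wyz !thM !mulgA.
  rewrite -(mulgA _ (theta (xs q) (H r t)) (H q (r * t))) mulgK.
  by rewrite -(mulgA _ (theta (xs q) (theta (xs r) (bx z)^-1)) (H q r)) thetaH !mulgA.
have hk : d (obs_k theta xs bx q r t) = 1.
  have : d W1 = d W2.
    apply: (@mulIg _ (xs (q * (r * t)))).
    by rewrite -/(X W1 _) X4 (mulgA q r t) -/(X W2 _) X2 mulgA.
  move=> e; apply: (@mulgI _ (d W1)); by rewrite mulg1 {2}e eW (dM W1).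
rewrite P1 -addrA (addrC (Z Wxy _)) P2 P3 -[RHS]addrA.
rewrite (addrC (Z Wyz _)) P4.
rewrite eW Zmul // Hgg -(mulgA q r t).
exact: zB.
Qed.
Lemma X1 b : X b 1 = d b. Proof. by rewrite /X xs1 mulg1. Qed.
Lemma betaM b b' : (F (d b) (d b') + Z b 1 + Z b' 1 = Z (b * b') 1)%R.
Proof.
have := Fprod b b' 1 1; rewrite !X1 xs1 th1 H1q !mulg1 g1q add0r //.
Qed.
Lemma betaC x b : (Z (theta x b) 1 + F (d (theta x b)) x = Z b 1 + F x (d b))%R.
Proof.
have P1 := Fprod (theta x b) (bx x)^-1 1 (pi x).
rewrite X1 Xbx Zb addr0 g1q add0r xs1 th1 H1q mulg1 mul1g in P1.
have P2 := Fprod (bx x)^-1 b (pi x) 1.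
rewrite X1 Xbx Zb addr0 gq1 add0r Hq1 !mulg1 in P2.
rewrite (addrC (Z (theta x b) 1)) P1 (addrC (Z b 1)) P2; congr Z.
by rewrite xspi thMM thd !mulgA mulVg mul1g.
Qed.
Lemma Zker c : d c = 1 -> Z c 1 = zeta c.
Proof. by move=> hc; rewrite /Z X1 hc bx1 mul1g. Qed.

End Constr.

Definition cocyc (D : groupType) (A : zmodType) (F : D -> D -> A) :=
  [/\ forall x y z, (F x y + F (x * y)%g z = F y z + F x (y * z)%g)%R,
      forall y, F 1%g y = 0%R & forall x, F x 1%g = 0%R].

Definition extT (D : groupType) (A : zmodType) (F : D -> D -> A) (hF : cocyc F)
  : Type := (A * D)%type.
HB.instance Definition _ D A F hF := Choice.on (@extT D A F hF).

Section ExtGroup.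
Variables (D : groupType) (A : zmodType) (F : D -> D -> A) (hF : cocyc F).
Definition emul (u v : extT hF) : extT hF := ((u.1 + v.1 + F u.2 v.2)%R, u.2 * v.2).
Definition eone : extT hF := (0%R, 1).
Definition einv (u : extT hF) : extT hF := ((- u.1 - F u.2^-1 u.2)%R, u.2^-1).
Lemma emulA : associative emul.
Proof.
have [hc _ _] := hF; move=> [a x] [b y] [c z]; rewrite /emul /=; congr pair; last by rewrite mulgA.
rewrite -!addrA; congr (a + _)%R.
congr (b + _)%R; by rewrite -hc addrCA.
Qed.
Lemma emul1 : left_id eone emul.
Proof. have [_ h1 _] := hF; move=> [a x]; by rewrite /emul /= h1 add0r addr0 mul1g. Qed.
Lemma emulg1 : right_id eone emul.
Proof. have [_ _ h1] := hF; move=> [a x]; by rewrite /emul /= h1 !addr0 mulg1. Qed.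
Lemma emulV : left_inverse eone einv emul.
Proof. move=> [a x]; by rewrite /emul /= (addrAC (- a)%R) addNr add0r addNr mulVg. Qed.
Lemma emulgV : right_inverse eone einv emul.
Proof.
have [hc h1 h2] := hF; move=> [a x]; rewrite /emul /= mulgV; congr pair.
have := hc x x^-1 x; rewrite mulgV mulVg h1 h2 !addr0 => ->.
by rewrite addrA subrr sub0r addNr.
Qed.
End ExtGroup.

HB.instance Definition _ D A F hF :=
  isGroup.Build (@extT D A F hF) (@emulA D A F hF) (@emul1 D A F hF)
    (@emulg1 D A F hF) (@emulV D A F hF) (@emulgV D A F hF).

Lemma extM D A F hF (u v : @extT D A F hF) :
  (u * v)%g = ((u.1 + v.1 + F u.2 v.2)%R, (u.2 * v.2)%g) :> extT hF.
Proof. by []. Qed.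
Lemma ext1 D A F hF : (1%g : @extT D A F hF) = (0%R, 1%g).
Proof. by []. Qed.

Lemma backward (B D Q : groupType) (d : B -> D) (theta : D -> B -> B)
  (A : zmodType) (zeta : B -> A)
  (pi : D -> Q) (xs : Q -> D) (bx : D -> B) :
  crossed_module d theta -> abstract_kernel d theta zeta ->
  is_cokernel d pi -> obstruction_data d pi xs bx ->
  obs_vanishes theta zeta xs bx -> zeta_extension_exists d theta zeta.
Proof.
move=> HCM HK HC HO [g0 Hg].
set FF := @F B D Q A d theta zeta pi xs bx g0.
have hF : cocyc FF.
  split; move=> *; [exact: Fcoc | exact: F1y | exact: Fx1].
have F11 : FF 1 1 = 0%R by exact: F1y.
exists (extT hF), (fun a => (a, 1) : extT hF), (fun e : extT hF => e.2),
  (fun b => (Z d zeta xs bx b 1, d b) : extT hF).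
split.
  by move=> a a'; rewrite extM /= F11 addr0 mulg1.
split.
  by move=> u v; rewrite extM.
split.
  by move=> a a' [].
split.
  move=> [a x] /=; split; first by move=> ->; exists a.
  by case=> a' [_ ->].
split.
  by move=> x; exists (0%R, x).
split.
  move=> a [a' x]; rewrite !extM /=; congr pair; last by rewrite mul1g mulg1.
  rewrite /FF F1y // Fx1 //; by rewrite !addr0 addrC.
split.
  move=> b b'; rewrite extM /=; congr pair; last by rewrite (dM HCM).
  by rewrite /FF -(betaM HCM HK HC HO Hg) -[LHS]addrA [LHS]addrC.
split.
  by [].
split.
  move=> x [a y] b /= <-; apply: (@mulIg (extT hF) (a, y)); rewrite mulgVK !extM /=.
  congr pair; last by rewrite (dth HCM) mulgVK.
  by rewrite addrAC /FF (betaC HCM HK HC HO Hg) addrC addrA.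
move=> c hc; congr pair; last by rewrite hc.
by rewrite (Zker zeta HO hc).
Qed.

Section Forward.
Variables (G : groupType).
Lemma cmv (J a w : G) : (forall z, J * z = z * J) -> a * (J * w) = J * (a * w).
Proof. by move=> hJ; rewrite mulgA -(hJ a) -mulgA. Qed.
Lemma helper1 (J1 J2 a b e f h : G) :
  (forall z, J1 * z = z * J1) -> (forall z, J2 * z = z * J2) ->
  a * (J1 * (b * e / f)) / a * (J2 * (a * f / h)) = J1 * J2 * (a * b * e / h).
Proof.
move=> h1 h2; rewrite -!mulgA !(cmv _ _ h2) !(cmv _ _ h1) !mulKg.
by rewrite (cmv _ _ h2).
Qed.
Lemma helper2 (J3 J4 a b e f h : G) :
  (forall z, J3 * z = z * J3) -> (forall z, J4 * z = z * J4) ->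
  J3 * (a * b / f) * (J4 * (f * e / h)) = J3 * J4 * (a * b * e / h).
Proof.
by move=> h1 h2; rewrite -!mulgA !(cmv _ _ h2) !mulKg.
Qed.
Lemma helper3 (K L P : G) :
  (forall z, K * z = z * K) -> (forall z, L * z = z * L) ->
  (K * P)^-1 * (L * P) = K^-1 * L.
Proof. by move=> hK hL; rewrite (hK P) (hL P) invgM -mulgA mulKg. Qed.
End Forward.

Lemma zC (A : zmodType) (a b c e : A) :
  (- (a + b) + (c + e) = - a - - e + - b - - c)%R.
Proof.
rewrite !opprK opprD addrA (addrAC _ c e).
by rewrite (addrAC (- a)%R).
Qed.

Lemma forward (B D Q : groupType) (d : B -> D) (theta : D -> B -> B)
  (A : zmodType) (zeta : B -> A)
  (pi : D -> Q) (xs : Q -> D) (bx : D -> B) :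
  crossed_module d theta -> abstract_kernel d theta zeta ->
  is_cokernel d pi -> obstruction_data d pi xs bx ->
  zeta_extension_exists d theta zeta -> obs_vanishes theta zeta xs bx.
Proof.
move=> HCM HK HC HO [E [j [p [beta [jM [pM [jinj [pker [psurj
  [jC [bM [pb [bconj bz]]]]]]]]]]]]].
have [es hes] : {es : Q -> E | forall q, p (es q) = xs q}.
  exists (fun q => proj1_sig (constructive_indefinite_description _ (psurj (xs q)))).
  by move=> q; case: constructive_indefinite_description.
have ex q r : exists a, j a * (es q * es r / es (q * r)) = beta (H xs bx q r).
  have : p (beta (H xs bx q r) / (es q * es r / es (q * r))) = 1.
    rewrite pM pb (ghomV _ pM) !pM (ghomV _ pM) !hes.
    by rewrite -(dH HCM HC HO q r) (mulgK (xs (q * r))) mulgV.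
  by move/pker=> [a ea]; exists a; rewrite -ea mulgVK.
have [c hc] : {c : Q -> Q -> A | forall q r,
    j (c q r) * (es q * es r / es (q * r)) = beta (H xs bx q r)}.
  exists (fun q r => proj1_sig (constructive_indefinite_description _ (ex q r))).
  by move=> q r; case: constructive_indefinite_description.
have j0 : j 0%R = 1.
  apply: (@mulgI _ (j 0%R)); by rewrite -jM addr0 mulg1.
have jN a : j (- a)%R = (j a)^-1.
  apply/esym/mulg1_eq; by rewrite -jM subrr.
have jc a z : j a * z = z * j a by apply: jC.
exists (fun q r => - c q r)%R => s r t.
set k := obs_k theta xs bx s r t.
have ek : beta k = j (- (c r t + c s (r * t)%g) + (c s r + c (s * r)%g t))%R.
  rewrite /k /obs_k bM (ghomV _ bM) !bM -/(H xs bx _ _).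
  rewrite (bconj _ (es s)) // -!hc.
  rewrite helper1 // (mulgA s r t) helper2 // -!jM helper3 //.
  by rewrite -jN -jM.
have hk : d k = 1.
  by rewrite -pb ek; apply/pker; eexists.
apply: jinj; rewrite bz // ek; congr j.
exact: zC.
Qed.

Theorem mainTheorem4 (B D : groupType) (d : B -> D) (theta : D -> B -> B)
  (A : zmodType) (zeta : B -> A)
  (Q : groupType) (pi : D -> Q) (xs : Q -> D) (bx : D -> B) :
  crossed_module d theta ->
  abstract_kernel d theta zeta ->
  kernel_surjective d zeta ->
  is_cokernel d pi ->
  obstruction_data d pi xs bx ->
  (zeta_extension_exists d theta zeta <-> obs_vanishes theta zeta xs bx).
Proof.
move=> HCM HK _ HC HO; split; [exact: (forward HCM HK HC HO) | exact: (backward HCM HK HC HO)].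
Qed.
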